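(* A graph is isomorphic to $KB_m(G)$ for some bipartite graph $G$ if and only if it is an IIC-comparability graph. That is, $KB_m(\text{bipartite})=\text{IIC-comparability}$.
   Context: All graphs are finite and simple. A biclique of a graph $G$ is a set $P\subseteq V(G)$ such that the induced subgraph $G[P]$ is a complete bipartite graph with both parts nonempty, and $P$ is inclusion-maximal with this property. Since $G[P]$ is connected, its bipartition into two nonempty independent sets $X,Y$ (every vertex of $X$ adjacent to every vertex of $Y$) is unique; we write $P=XY$ to mean $P=X\cup Y$ with $X,Y$ these two parts, called the sides of $P$. Two bicliques $P,Q$ of $G$ are mutually included if their sides can be named $P=X_PY_P$, $Q=X_QY_Q$ so that $X_Q\subsetneq X_P$ and $Y_P\subsetneq Y_Q$. The mutually included biclique graph $KB_m(G)$ has the set of bicliques of $G$ as vertex set, two distinct bicliques being adjacent iff they are mutually included. For a poset $\mathcal{P}=(C,\le)$ and $x\in C$, let $I^-_{\mathcal{P}}(x)=\{y\in C: y\le x\}$ and $I^+_{\mathcal{P}}(x)=\{y\in C: x\le y\}$; $\mathcal{P}$ is interval intersection closed (IIC) if for all $u,v\in C$: whenever $I^-_{\mathcal{P}}(u)\cap I^-_{\mathcal{P}}(v)\neq\emptyset$ there is $w\in C$ with $I^-_{\mathcal{P}}(w)=I^-_{\mathcal{P}}(u)\cap I^-_{\mathcal{P}}(v)$, and whenever $I^+_{\mathcal{P}}(u)\cap I^+_{\mathcal{P}}(v)\neq\emptyset$ there is $w\in C$ with $I^+_{\mathcal{P}}(w)=I^+_{\mathcal{P}}(u)\cap I^+_{\mathcal{P}}(v)$.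 The comparability graph of a poset $(C,\le)$ has vertex set $C$, two distinct elements adjacent iff they are comparable. A graph is IIC-comparability if it is the comparability graph of some (finite) IIC poset. *)

(* Defs.v *)
From mathcomp Require Import all_boot.
Set Implicit Arguments. Unset Strict Implicit. Unset Printing Implicit Defensive.

Section Graphs.
Variable T : finType.
Variable e : rel T.

Definition simple_graph : Prop := symmetric e /\ irreflexive e.

Definition bipartite : Prop := exists c : T -> bool, forall x y, e x y -> c x != c y.

Definition sides (P X Y : {set T}) : bool :=
  [&& X != set0, Y != set0, [disjoint X & Y], P == X :|: Y,
      [forall x in X, forall x' in X, ~~ e x x'],
      [forall y in Y, forall y' in Y, ~~ e y y'] &
      [forall x in X, forall y in Y, e x y]].

Definition cbip (P : {set T}) : bool := [exists X, exists Y, sides P X Y].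

Definition is_biclique (P : {set T}) : bool :=
  cbip P && [forall Q : {set T}, (P \subset Q) && cbip Q ==> (Q == P)].

Definition mutually_included (P Q : {set T}) : bool :=
  [exists XP, exists YP, exists XQ, exists YQ,
     [&& sides P XP YP, sides Q XQ YQ, XQ \proper XP & YP \proper YQ]].

Definition biclique_type := {P : {set T} | is_biclique P}.

Definition KBm : rel biclique_type :=
  fun P Q => (P != Q) && mutually_included (val P) (val Q).
End Graphs.
Arguments KBm {T} e.

Definition isomorphic (T1 T2 : finType) (e1 : rel T1) (e2 : rel T2) : Prop :=
  exists f : T1 -> T2, bijective f /\ forall x y, e1 x y = e2 (f x) (f y).

Section Posets.
Variable C : finType.
Variable le : rel C.

Definition partial_order : Prop :=
  reflexive le /\ antisymmetric le /\ transitive le.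

Definition IIC : Prop :=
  (forall u v, (exists y, le y u /\ le y v) ->
     exists w, forall y, le y w <-> (le y u /\ le y v)) /\
  (forall u v, (exists y, le u y /\ le v y) ->
     exists w, forall y, le w y <-> (le u y /\ le v y)).

Definition comparability : rel C := fun x y => (x != y) && (le x y || le y x).
End Posets.

(* Main.v *)
Require Import Defs.
From mathcomp Require Import all_boot.
Set Implicit Arguments. Unset Strict Implicit. Unset Printing Implicit Defensive.

Section Bip.
Variable T : finType.
Variable e : rel T.
Hypothesis esymm : symmetric e.

Definition side (c : T -> bool) (P : {set T}) : {set T} := [set x in P | c x].
Definition nb (c : T -> bool) (U : {set T}) : {set T} :=
  [set x | c x & [forall y in U, e x y]].
Definition ncol (c : T -> bool) : T -> bool := fun x => ~~ c x.

Lemma side_nn c (P : {set T}) : side (ncol (ncol c)) P = side c P.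
Proof. by apply/setP=> x; rewrite !inE /ncol negbK. Qed.
Lemma nb_nn c (U : {set T}) : nb (ncol (ncol c)) U = nb c U.
Proof. by apply/setP=> x; rewrite !inE /ncol negbK. Qed.

Definition proper_col (c : T -> bool) := forall x y, e x y -> c x != c y.
Lemma proper_ncol c : proper_col c -> proper_col (ncol c).
Proof. by move=> hc x y /hc; rewrite /ncol; case: (c x); case: (c y). Qed.

Lemma sides_elim (P X Y : {set T}) : sides e P X Y ->
  [/\ X != set0, Y != set0, P = X :|: Y & forall x y, x \in X -> y \in Y -> e x y].
Proof.
case/and5P=> X0 Y0 _ /eqP -> /and3P [_ _ /forallP H]; split=> // x y xX yY.
by move: (H x); rewrite xX /= => /forallP /(_ y); rewrite yY.
Qed.

Lemma sides_sym (P X Y : {set T}) : sides e P X Y -> sides e P Y X.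
Proof.
case/and5P=> X0 Y0 d /eqP PXY /and3P [iX iY /forallP H].
rewrite /sides X0 Y0 disjoint_sym d PXY setUC eqxx iX iY /=.
apply/forallP=> y; apply/implyP=> yY; apply/forallP=> x; apply/implyP=> xX.
by move: (H x); rewrite xX /= => /forallP /(_ y); rewrite yY esymm.
Qed.

Lemma nb_anti c (U U' : {set T}) : U \subset U' -> nb c U' \subset nb c U.
Proof.
move=> /subsetP UU; apply/subsetP=> x; rewrite !inE => /andP [-> /forallP H] /=.
by apply/forallP=> y; apply/implyP=> /UU yU; move: (H y); rewrite yU.
Qed.

Lemma nb_setU c (U U' : {set T}) : nb c (U :|: U') = nb c U :&: nb c U'.
Proof.
apply/setP=> x; rewrite !inE; case: (c x) => //=.
apply/forallP/andP => [H|[/forallP H1 /forallP H2] y].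
- split; apply/forallP=> y; apply/implyP=> yU; move: (H y); rewrite inE yU ?orbT //.
- rewrite inE; apply/implyP=> /orP [yU|yU]; [move: (H1 y) | move: (H2 y)]; rewrite yU //.
Qed.

Lemma side_part c (P : {set T}) : P = side c P :|: side (ncol c) P.
Proof. by apply/setP=> x; rewrite !inE /ncol; case: (x \in P); case: (c x). Qed.

Section Col.
Variable c : T -> bool.
Hypothesis hc : proper_col c.
Notation nc := (ncol c).

Lemma side_of (S S' : {set T}) : (forall x, x \in S -> c x) -> (forall y, y \in S' -> ~~ c y) ->
  side c (S :|: S') = S /\ side nc (S :|: S') = S'.
Proof.
move=> cS cS'; split; apply/setP=> z; rewrite !inE /ncol.
- case: (boolP (z \in S)) => zS /=; first by rewrite cS.
  by case: (boolP (z \in S')) => zS' //=; rewrite (negbTE (cS' _ zS')).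
- case: (boolP (z \in S')) => zS' /=; first by rewrite cS' ?orbT.
  by case: (boolP (z \in S)) => zS //=; rewrite cS.
Qed.

Lemma sides_intro (P X Y : {set T}) : X != set0 -> Y != set0 -> P = X :|: Y ->
  (forall x, x \in X -> c x) -> (forall y, y \in Y -> ~~ c y) ->
  (forall x y, x \in X -> y \in Y -> e x y) -> sides e P X Y.
Proof.
move=> X0 Y0 PXY cX cY cXY; rewrite /sides X0 Y0 PXY eqxx /=.
apply/and4P; split.
- rewrite disjoint_subset; apply/subsetP=> z zX; rewrite inE; apply/negP=> zY.
  by move: (cX z zX) (cY z zY) => ->.
- apply/forallP=> x; apply/implyP=> xX; apply/forallP=> x'; apply/implyP=> x'X.
  by apply/negP=> /hc; rewrite cX // cX.
- apply/forallP=> x; apply/implyP=> xX; apply/forallP=> x'; apply/implyP=> x'X.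
  by apply/negP=> /hc; rewrite (negbTE (cY _ xX)) (negbTE (cY _ x'X)).
- apply/forallP=> x; apply/implyP=> xX; apply/forallP=> y; apply/implyP=> yY; exact: cXY.
Qed.

Lemma sides_col (P X Y : {set T}) : sides e P X Y ->
  (X = side c P /\ Y = side nc P) \/ (X = side nc P /\ Y = side c P).
Proof.
case/sides_elim=> /set0Pn [x0 x0X] /set0Pn [y0 y0Y] PXY cXY.
have hX x : x \in X -> c x = ~~ c y0.
  move=> xX; move: (hc (cXY _ _ xX y0Y)); by case: (c x); case: (c y0).
have hY y : y \in Y -> c y = ~~ c x0.
  move=> yY; move: (hc (cXY _ _ x0X yY)); by case: (c x0); case: (c y).
have h0 := hX x0 x0X.
case b: (c x0).
- have cX x : x \in X -> c x by move=> xX; rewrite hX // -h0 b.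
  have cY y : y \in Y -> ~~ c y by move=> yY; rewrite hY // b.
  have [h1 h2] := side_of cX cY.
  by left; rewrite PXY h1 h2.
- have cY y : y \in Y -> c y by move=> yY; rewrite hY // b.
  have cX x : x \in X -> ~~ c x by move=> xX; rewrite hX //; move: h0; rewrite b; case: (c y0).
  have [h1 h2] := side_of cY cX.
  by right; rewrite PXY setUC h1 h2.
Qed.


Lemma sides_canon (P : {set T}) : cbip e P -> sides e P (side c P) (side nc P).
Proof.
case/existsP=> X /existsP [Y s].
by case: (sides_col s) => [[<- <-]|[<- <-]] //; exact: sides_sym.
Qed.

Lemma bic_side0 (P : {set T}) : cbip e P -> side c P != set0 /\ side nc P != set0.
Proof. by move/sides_canon/sides_elim=> [? ? _ _]. Qed.

Lemma bic_nb (P : {set T}) : is_biclique e P -> side c P = nb c (side nc P).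
Proof.
case/andP=> cb /forallP maxP. have s := sides_canon cb.
case/sides_elim: (s) => A0 B0 PAB cAB.
apply/eqP; rewrite eqEsubset; apply/andP; split.
- apply/subsetP=> x xA; rewrite inE; apply/andP; split; first by move: xA; rewrite inE => /andP[].
  apply/forallP=> y; apply/implyP=> yB; exact: cAB.
- apply/subsetP=> x; rewrite inE => /andP [cx /forallP hx].
  have hx' y : y \in side nc P -> e x y by move=> yB; move: (hx y); rewrite yB.
  have cbQ : cbip e (x |: P).
    apply/existsP; exists (x |: side c P); apply/existsP; exists (side nc P).
    apply: sides_intro => //.
    + by apply/set0Pn; exists x; rewrite setU11.
    + by rewrite -setUA -PAB.
    + move=> z; rewrite !inE => /orP [/eqP -> //|/andP [_ ->] //].
    + by move=> z; rewrite !inE => /andP [].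
    + move=> z y; rewrite !inE => /orP [/eqP ->|zA] yB; first by apply: hx'; rewrite inE.
      by apply: cAB; rewrite inE.
  move: (maxP (x |: P)); rewrite subsetUr cbQ /= => /eqP QP.
  by rewrite inE cx andbT -QP setU11.
Qed.

Lemma bic_intro (P : {set T}) : side c P != set0 -> side nc P != set0 ->
  side c P = nb c (side nc P) -> side nc P = nb nc (side c P) -> is_biclique e P.
Proof.
move=> A0 B0 hA hB.
have cAB x y : x \in side c P -> y \in side nc P -> e x y.
  by rewrite {1}hA inE => /andP [_ /forallP H] yB; move: (H y); rewrite yB.
have s : sides e P (side c P) (side nc P).
  apply: sides_intro => //; first exact: side_part.
  - by move=> x; rewrite inE => /andP [].
  - by move=> x; rewrite inE => /andP [].
apply/andP; split; first by apply/existsP; exists (side c P); apply/existsP; exists (side nc P).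
apply/forallP=> Q; apply/implyP=> /andP [PQ cbQ].
have [_ _ _ cQ] := sides_elim (sides_canon cbQ).
have AQ : side c P \subset side c Q.
  by apply/subsetP=> x; rewrite !inE => /andP [xP ->]; rewrite (subsetP PQ).
have BQ : side nc P \subset side nc Q.
  by apply/subsetP=> x; rewrite !inE => /andP [xP ->]; rewrite (subsetP PQ).
have QA : side c Q \subset side c P.
  apply/subsetP=> x xQ; rewrite hA inE; apply/andP; split.
    by move: xQ; rewrite inE => /andP [].
  apply/forallP=> y; apply/implyP=> yB; apply: cQ => //; exact: (subsetP BQ).
have QB : side nc Q \subset side nc P.
  apply/subsetP=> y yQ; rewrite hB inE; apply/andP; split.
    by move: yQ; rewrite inE => /andP [].
  apply/forallP=> x; apply/implyP=> xA; rewrite esymm; apply: cQ => //; exact: (subsetP AQ).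
rewrite eqEsubset PQ andbT {1}(side_part c Q) {1}(side_part c P).
exact: setUSS.
Qed.

Lemma nb_galois (S : {set T}) : (forall x, x \in S -> c x) -> S \subset nb c (nb nc S).
Proof.
move=> cS; apply/subsetP=> x xS; rewrite inE cS //=.
apply/forallP=> y; apply/implyP; rewrite inE => /andP [_ /forallP H].
by move: (H x); rewrite xS esymm.
Qed.

Lemma closed_bic (U : {set T}) : nb c U != set0 -> U != set0 ->
  is_biclique e (nb c U :|: nb nc (nb c U)) /\ side c (nb c U :|: nb nc (nb c U)) = nb c U.
Proof.
move=> /set0Pn [x0 x0S] U0.
have cS x : x \in nb c U -> c x by rewrite inE => /andP [].
have cS' y : y \in nb nc (nb c U) -> ~~ c y by rewrite inE => /andP [].
have [h1 h2] := side_of cS cS'.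
have UU : U \subset nb nc (nb c U).
  apply/subsetP=> y yU; rewrite inE; apply/andP; split.
    move: x0S; rewrite inE => /andP [cx /forallP H]; move: (H y); rewrite yU /= => /hc.
    by rewrite cx /ncol; case: (c y).
  apply/forallP=> x; apply/implyP; rewrite inE => /andP [_ /forallP H].
  by move: (H y); rewrite yU esymm.
split=> //; apply: bic_intro; rewrite ?h1 ?h2 //.
- by apply/set0Pn; exists x0.
- by apply/set0Pn; case/set0Pn: U0 => y yU; exists y; exact: (subsetP UU).
- apply/eqP; rewrite eqEsubset nb_galois //=; exact: nb_anti.
Qed.

End Col.
End Bip.

Section Bip2.
Variable T : finType.
Variable e : rel T.
Hypothesis esymm : symmetric e.

Section Col2.
Variable c : T -> bool.
Hypothesis hc : proper_col e c.
Notation nc := (ncol c).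
Let hnc := proper_ncol hc.

Lemma bic_nb' (P : {set T}) : is_biclique e P -> side nc P = nb e nc (side c P).
Proof. by move=> bP; have := bic_nb esymm hnc bP; rewrite side_nn. Qed.

Lemma bic_inj (P Q : {set T}) : is_biclique e P -> is_biclique e Q ->
  side c P = side c Q -> P = Q.
Proof.
move=> bP bQ h; rewrite (side_part c P) (side_part c Q) (bic_nb' bP) (bic_nb' bQ).
by rewrite h.
Qed.

Lemma bic_inj' (P Q : {set T}) : is_biclique e P -> is_biclique e Q ->
  side nc P = side nc Q -> P = Q.
Proof.
move=> bP bQ h; rewrite (side_part c P) (side_part c Q) (bic_nb esymm hc bP) (bic_nb esymm hc bQ).
by rewrite h.
Qed.

Lemma galois_le (P Q : {set T}) : is_biclique e P -> is_biclique e Q ->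
  side c P \subset side c Q -> side nc Q \subset side nc P.
Proof. by move=> bP bQ h; rewrite (bic_nb' bP) (bic_nb' bQ); exact: nb_anti. Qed.

Lemma mi_of (P Q : {set T}) : is_biclique e P -> is_biclique e Q -> P != Q ->
  side c Q \subset side c P -> mutually_included e P Q.
Proof.
move=> bP bQ nPQ h.
apply/existsP; exists (side c P); apply/existsP; exists (side nc P).
apply/existsP; exists (side c Q); apply/existsP; exists (side nc Q).
have cP : cbip e P by case/andP: bP.
have cQ : cbip e Q by case/andP: bQ.
rewrite (sides_canon esymm hc cP) (sides_canon esymm hc cQ) /= !properEneq h galois_le //.
rewrite !andbT; apply/andP; split.
- by apply: contraNneq nPQ => /esym /(bic_inj bP bQ) ->.
- by apply: contraNneq nPQ => /(bic_inj' bP bQ) ->.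
Qed.
End Col2.

Section Col3.
Variable c : T -> bool.
Hypothesis hc : proper_col e c.
Notation nc := (ncol c).
Let hnc := proper_ncol hc.

Lemma galois_iff (P Q : {set T}) : is_biclique e P -> is_biclique e Q ->
  (side c P \subset side c Q) = (side nc Q \subset side nc P).
Proof.
move=> bP bQ; apply/idP/idP; first exact: galois_le.
by move/(galois_le hnc bQ bP); rewrite !side_nn.
Qed.

Lemma mi_iff (P Q : {set T}) : is_biclique e P -> is_biclique e Q -> P != Q ->
  mutually_included e P Q = (side c P \subset side c Q) || (side c Q \subset side c P).
Proof.
move=> bP bQ nPQ; apply/idP/idP.
- case/existsP => XP /existsP [YP /existsP [XQ /existsP [YQ /and4P [sP sQ]]]].
  have [_ _ _ _] := sides_elim sQ.
  case/sides_elim: (sQ) => /set0Pn [z zXQ] _ _ _.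
  move: zXQ.
  case: (sides_col hc sP) => [[-> ->]|[-> ->]];
  case: (sides_col hc sQ) => [[-> ->]|[-> ->]].
  + by move=> _ /proper_sub -> _; rewrite orbT.
  + move=> zQ /proper_sub/subsetP/(_ z zQ); move: zQ; rewrite !inE /ncol.
    by case/andP=> _ /negbTE ->; rewrite andbF.
  + move=> zQ /proper_sub/subsetP/(_ z zQ); move: zQ; rewrite !inE /ncol.
    by case/andP=> _ ->; rewrite andbF.
  + by move=> _ _ /proper_sub ->.
- case/orP=> h; last exact: (mi_of hc bP bQ nPQ h).
  by apply: (mi_of hnc bP bQ nPQ); apply: galois_le.
Qed.

Definition leB : rel (biclique_type e) :=
  fun P Q => side c (val P) \subset side c (val Q).

Lemma KBm_eq P Q : KBm e P Q = comparability leB P Q.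
Proof.
rewrite /KBm /comparability; case: (eqVneq P Q) => [->|nPQ] //=.
apply: mi_iff; try exact: valP.
by apply: contraNneq nPQ => /val_inj ->.
Qed.

Lemma leB_po : partial_order leB.
Proof.
split; first by move=> P; exact: subxx.
split; last by move=> Q P R; exact: subset_trans.
move=> P Q /andP [h1 h2]; apply: val_inj; apply: (bic_inj hc (valP P) (valP Q)).
by apply/eqP; rewrite eqEsubset; apply/andP; split.
Qed.


Lemma leB_IIC : IIC leB.
Proof.
split.
- move=> u v [y [yu yv]].
  have bu := valP u; have bv := valP v; have by' := valP y.
  set U := side nc (val u) :|: side nc (val v).
  have hU : nb e c U = side c (val u) :&: side c (val v).
    by rewrite /U nb_setU -!bic_nb.
  have H1 : nb e c U != set0.
    case: (bic_side0 esymm hc (let: conj a _ := andP by' in a)) => /set0Pn [z zy] _.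
    apply/set0Pn; exists z; rewrite hU inE (subsetP yu) // (subsetP yv) //.
  have H2 : U != set0.
    case: (bic_side0 esymm hc (let: conj a _ := andP bu in a)) => _ /set0Pn [z zu].
    by apply/set0Pn; exists z; rewrite inE zu.
  have [bw sw] := closed_bic esymm hc H1 H2.
  exists (Sub _ bw) => z; rewrite /leB /= sw hU subsetI.
  by split; [move/andP | move=> [-> ->]].
- move=> u v [y [uy vy]].
  have bu := valP u; have bv := valP v; have by' := valP y.
  set U := side c (val u) :|: side c (val v).
  have hU : nb e nc U = side nc (val u) :&: side nc (val v).
    by rewrite /U nb_setU -!bic_nb'.
  have H1 : nb e nc U != set0.
    case: (bic_side0 esymm hc (let: conj a _ := andP by' in a)) => _ /set0Pn [z zy].
    apply/set0Pn; exists z; rewrite hU inE.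
    rewrite (subsetP (galois_le hc bu by' uy)) // (subsetP (galois_le hc bv by' vy)) //.
  have H2 : U != set0.
    case: (bic_side0 esymm hc (let: conj a _ := andP bu in a)) => /set0Pn [z zu] _.
    by apply/set0Pn; exists z; rewrite inE zu.
  have [bw sw] := closed_bic esymm hnc H1 H2.
  exists (Sub _ bw) => z; rewrite /leB /=.
  rewrite !(galois_iff _ (valP z)) //= sw hU subsetI.
  by split; [move/andP | move=> [-> ->]].
Qed.

End Col3.
End Bip2.

Section Dir2.
Variable C : finType.
Variable le : rel C.
Hypothesis po : partial_order le.
Hypothesis iic : IIC le.

Definition TT := (C + C)%type.
Definition ee : rel TT := fun a b => match a, b with
 | inl x, inr y => le x y | inr y, inl x => le x y | _, _ => false end.
Definition cc : TT -> bool := fun a => if a is inl _ then true else false.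
Lemma ee_sym : symmetric ee. Proof. by case=> x; case=> y. Qed.
Lemma ee_irr : irreflexive ee. Proof. by case. Qed.
Lemma cc_prop : proper_col ee cc. Proof. by case=> x; case=> y. Qed.

Let lrefl : reflexive le := let: conj r _ := po in r.
Let lanti : antisymmetric le := let: conj _ (conj a _) := po in a.
Let ltrans : transitive le := let: conj _ (conj _ t) := po in t.

Definition fset (x : C) : {set TT} :=
  [set a : TT | match a with inl y => le y x | inr y => le x y end].

Lemma fset_bic x : is_biclique ee (fset x).
Proof.
apply: (bic_intro ee_sym cc_prop).
- by apply/set0Pn; exists (inl x); rewrite !inE /= lrefl.
- by apply/set0Pn; exists (inr x); rewrite !inE /= lrefl.
- apply/setP; case=> y; rewrite !inE /= ?andbF ?andbT //.
  apply/idP/forallP => [yx|H].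
  + by case=> z; rewrite !inE /ncol /= ?andbF ?andbT //; apply/implyP; apply: ltrans.
  + by move: (H (inr x)); rewrite !inE /ncol /= lrefl.
- apply/setP; case=> y; rewrite !inE /ncol /= ?andbF ?andbT //.
  apply/idP/forallP => [xy|H].
  + by case=> z; rewrite !inE /= ?andbF ?andbT //; apply/implyP => zx; apply: ltrans zx xy.
  + by move: (H (inl x)); rewrite !inE /= lrefl.
Qed.

Definition Fb (x : C) : biclique_type ee := Sub _ (fset_bic x).

Lemma leB_F x y : leB cc (Fb x) (Fb y) = le x y.
Proof.
rewrite /leB /=; apply/subsetP/idP => [H|xy [z|z]].
- by move: (H (inl x)); rewrite !inE /= !andbT lrefl; apply.
- by rewrite !inE /= !andbT => zx; apply: ltrans zx xy.
- by rewrite !inE /= !andbF.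
Qed.

Lemma F_inj : injective Fb.
Proof.
move=> x y H; apply: lanti; rewrite -!leB_F H.
by apply/andP; split; exact: subxx.
Qed.

Lemma KB_F x y : KBm ee (Fb x) (Fb y) = comparability le x y.
Proof. by rewrite (KBm_eq ee_sym cc_prop) /comparability !leB_F (inj_eq F_inj). Qed.

Lemma iic_seq (s : seq C) : s != [::] -> (exists y, forall z, z \in s -> le y z) ->
  exists w, forall y, le y w <-> (forall z, z \in s -> le y z).
Proof.
elim: s => [//|z s IH] _ [y0 hy0].
case: s IH hy0 => [|z' s] IH hy0.
  exists z => y; split; [by move=> yz z1; rewrite inE => /eqP ->|].
  by move=> H; apply: H; rewrite inE.
have [w' hw'] : exists w', forall y, le y w' <-> (forall z1, z1 \in z' :: s -> le y z1).
  by apply: IH => //; exists y0 => z1 hz1; apply: hy0; rewrite inE hz1 orbT.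
have y0w' : le y0 w' by apply/(proj2 (hw' y0)) => z1 hz1; apply: hy0; rewrite inE hz1 orbT.
have [w hw] := (let: conj a _ := iic in a) z w' (ex_intro _ y0 (conj (hy0 z (mem_head _ _)) y0w')).
exists w => y; split.
- by move=> /hw [yz /hw' H] z1; rewrite inE => /orP [/eqP ->|/H].
- move=> H; apply/hw; split; first by apply: H; rewrite inE eqxx.
  by apply/hw' => z1 hz1; apply: H; rewrite inE hz1 orbT.
Qed.

Lemma F_surj P : exists x, Fb x == P.
Proof.
have bP := valP P; have cP : cbip ee (val P) by case/andP: bP.
case: (bic_side0 ee_sym cc_prop cP) => /set0Pn [a aA] /set0Pn [b bB].
set s := [seq z <- enum C | inr z \in val P].
have hnb := bic_nb ee_sym cc_prop bP.
have key y : (inl y \in side cc (val P)) = [forall t in side (ncol cc) (val P), ee (inl y) t].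
  by rewrite hnb inE.
have [w hw] : exists w, forall y, le y w <-> (forall z, z \in s -> le y z).
  apply: iic_seq.
  - case: b bB => [z|z]; rewrite !inE /ncol /= ?andbF // andbT => zP.
    apply/eqP => s0; have : z \in s by rewrite mem_filter zP mem_enum.
    by rewrite s0.
  - case: a aA => [y0|y0] aA; last by move: aA; rewrite !inE andbF.
    exists y0 => z; rewrite mem_filter => /andP [zP _].
    move: aA; rewrite key => /forallP /(_ (inr z)); rewrite !inE /ncol /= zP; exact.
exists w; apply/eqP; apply: val_inj => /=.
apply: (bic_inj ee_sym cc_prop (fset_bic w) bP).
apply/setP; case=> y; last by rewrite !inE /= !andbF.
rewrite key !inE /= andbT; apply/idP/forallP.
- move=> yw t; apply/implyP; case: t => [z|z]; rewrite !inE /ncol /= ?andbF // andbT => zP.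
  by apply: (proj1 (hw y) yw); rewrite mem_filter zP mem_enum.
- move=> H; apply/(proj2 (hw y)) => z; rewrite mem_filter => /andP [zP _].
  by move: (H (inr z)); rewrite !inE /ncol /= zP.
Qed.

End Dir2.

Theorem theorem5 (V : finType) (adj : rel V) :
  simple_graph adj ->
  (exists (T : finType) (e : rel T),
      simple_graph e /\ bipartite e /\ isomorphic (KBm e) adj) <->
  (exists (C : finType) (le : rel C),
      partial_order le /\ IIC le /\ isomorphic (comparability le) adj).
Proof.
move=> _; split.
- move=> [T [e [[esymm _] [[c hc] [h [bh hh]]]]]].
  have hc' : proper_col e c by move=> x y /hc.
  exists (biclique_type e), (leB c); split; first exact: leB_po.
  split; first exact: leB_IIC.
  exists h; split=> // x y; rewrite -hh; exact: esym (KBm_eq esymm hc' x y).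
- move=> [C [le [po [iic [h [bh hh]]]]]].
  exists (TT C), (ee le); split; first by split; [exact: ee_sym | exact: ee_irr].
  split; first by exists (@cc C); exact: cc_prop.
  pose g P := xchoose (F_surj po iic P).
  have Fg P : Fb po (g P) = P by apply/eqP; exact: (xchooseP (F_surj po iic P)).
  have gF x : g (Fb po x) = x by apply: (@F_inj _ _ po); rewrite Fg.
  exists (h \o g); split.
    by apply: bij_comp => //; exists (Fb po).
  move=> P Q; rewrite /= -hh -{1}(Fg P) -{1}(Fg Q); exact: KB_F.
Qed.
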